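(* (i) If $K\subset\mathbb{R}^{N+1}_+$ is compact and $\mu\in\mathcal{M}_K$, then $\mathbb{P}^h_\mu(A^{-1}z)=\mathbb{P}^{\tilde h}_{A_\#\mu}(z)$ for all $z\in\mathbb{R}^{N+1}_-$, where $A_\#\mu\in\mathcal{M}_{AK}$ is the pushforward $(A_\#\mu)(E)=\mu(A^{-1}E)$. If $K\subset\mathbb{R}^{N+1}_-$ is compact and $\mu\in\mathcal{M}_K$, then $\mathbb{P}^{\tilde h}_\mu(Az)=\mathbb{P}^h_{(A^{-1})_\#\mu}(z)$ for all $z\in\mathbb{R}^{N+1}_+$, where $((A^{-1})_\#\mu)(E)=\mu(AE)$. (ii) $\lambda\in\mathcal{M}_K$ is the $h$-capacitary measure of a compact $K\subset\mathbb{R}^{N+1}_+$ if and only if $A_\#\lambda$ is the $\tilde h$-capacitary measure of $AK$. (iii) For compact $K\subset\mathbb{R}^{N+1}_+$ with $h$-capacitary measure $\lambda$, $C_{\tilde h}(AK)=\lambda(K)=C_h(K)$; for compact $K\subset\mathbb{R}^{N+1}_-$ with $\tilde h$-capacitary measure $\tilde\lambda$, $C_h(A^{-1}K)=\tilde\lambda(K)=C_{\tilde h}(K)$.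
   Context: Fix $\gamma\in\mathbb{R}^N$, $N\ge1$. $F(x,t)=(4\pi t)^{-N/2}e^{-|x|^2/(4t)}$ for $t>0$, $0$ otherwise; $F(z-w)$ is evaluated with this formula at $z-w$. $h(x,t)=F(x-\gamma,t)$, $h_*(x,t)=(\pi/t)^{N/2}e^{|x-\gamma|^2/(4t)}$ on $\mathbb{R}^{N+1}_+$; $\tilde h(x,t)=e^{\langle x,\gamma\rangle+|\gamma|^2t}$, $\tilde h_*(y,\tau)=e^{-\langle y,\gamma\rangle-|\gamma|^2\tau}$ on $\mathbb{R}^{N+1}_-$. Appell map $A(x,t)=(\frac{x}{2t},-\frac{1}{4t})$, $A^{-1}(x,t)=(-\frac{x}{2t},-\frac{1}{4t})$. For compact $K$ (in $\mathbb{R}^{N+1}_+$ or $\mathbb{R}^{N+1}_-$), $\mathcal{M}_K$ is the set of nonnegative Radon measures supported in $K$. $\mathbb{P}^h_\mu(z)=\int\frac{F(z-w)}{h(z)h_*(w)}d\mu(w)$ ($z\in\mathbb{R}^{N+1}_+$), $\mathbb{P}^{\tilde h}_\mu(z)=\int\frac{F(z-w)}{\tilde h(z)\tilde h_*(w)}d\mu(w)$ ($z\in\mathbb{R}^{N+1}_-$). $C_h(K)=\max\{\mu(K):\mu\in\mathcal{M}_K,\mathbb{P}^h_\mu\le1\text{ on }\mathbb{R}^{N+1}_+\}$ and $C_{\tilde h}(K)=\max\{\mu(K):\mu\in\mathcal{M}_K,\mathbb{P}^{\tilde h}_\mu\le1\text{ on }\mathbb{R}^{N+1}_-\}$; an $h$-capacitary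 ($\tilde h$-capacitary) measure of $K$ is a measure attaining this maximum. *)

(* Defs.v *)
From mathcomp Require Import all_boot all_order all_algebra.
From mathcomp Require Import all_classical all_reals all_analysis.
Import Order.TTheory GRing.Theory Num.Theory.
Import numFieldNormedType.Exports.
Set Implicit Arguments. Unset Strict Implicit. Unset Printing Implicit Defensive.
Local Open Scope classical_set_scope.
Local Open Scope ring_scope.

Definition Pt (R : realType) (N : nat) := ('rV[R]_N * R)%type.

Definition BPt (R : realType) (N : nat) := g_sigma_algebraType (@open (Pt R N)).

Notation Meas R N := {measure set (BPt R N) -> \bar R}.

Section defs.
Variables (R : realType) (N : nat).
Local Notation P := (BPt R N).

Definition sqn (x : 'rV[R]_N) : R := \sum_(i < N) (x ord0 i) ^+ 2.
Definition dotp (x y : 'rV[R]_N) : R := \sum_(i < N) x ord0 i * y ord0 i.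

Definition upper : set P := [set z | 0 < z.2].
Definition lower : set P := [set z | z.2 < 0].

Definition F (z : P) : R :=
  if 0 < z.2 then powR (4 * pi * z.2) (- (N%:R / 2)) * expR (- sqn z.1 / (4 * z.2))
  else 0.
Definition zsub (z w : P) : P := (z.1 - w.1, z.2 - w.2).

Variable gamma : 'rV[R]_N.

Definition h (z : P) : R := F (z.1 - gamma, z.2).
Definition hs (w : P) : R :=
  powR (pi / w.2) (N%:R / 2) * expR (sqn (w.1 - gamma) / (4 * w.2)).
Definition ht (z : P) : R := expR (dotp z.1 gamma + sqn gamma * z.2).
Definition hts (w : P) : R := expR (- dotp w.1 gamma - sqn gamma * w.2).

Definition A (z : P) : P := ((2 * z.2)^-1 *: z.1, - (4 * z.2)^-1).
Definition Ainv (z : P) : P := (- ((2 * z.2)^-1 *: z.1), - (4 * z.2)^-1).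

(* M_K: nonnegative (Borel, hence Radon, since finite) measures supported in K *)
Definition MK (K : set P) (mu : Meas R N) : Prop :=
  mu (~` K) = 0%E /\ (mu K < +oo)%E.

Definition Ph (mu : Meas R N) (z : P) : \bar R :=
  (\int[mu]_(w in [set: P]) (F (zsub z w) / (h z * hs w))%:E)%E.
Definition Pht (mu : Meas R N) (z : P) : \bar R :=
  (\int[mu]_(w in [set: P]) (F (zsub z w) / (ht z * hts w))%:E)%E.

Definition h_adm (K : set P) (mu : Meas R N) : Prop :=
  MK K mu /\ forall z, upper z -> (Ph mu z <= 1)%E.
Definition ht_adm (K : set P) (mu : Meas R N) : Prop :=
  MK K mu /\ forall z, lower z -> (Pht mu z <= 1)%E.

(* capacities (the maximum, written as a supremum; it is attained) *)
Definition Ch (K : set P) : \bar R :=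
  ereal_sup [set x | exists mu : Meas R N, h_adm K mu /\ x = mu K].
Definition Cht (K : set P) : \bar R :=
  ereal_sup [set x | exists mu : Meas R N, ht_adm K mu /\ x = mu K].

Definition h_capacitary (K : set P) (lam : Meas R N) : Prop :=
  h_adm K lam /\ forall mu : Meas R N, h_adm K mu -> (mu K <= lam K)%E.
Definition ht_capacitary (K : set P) (lam : Meas R N) : Prop :=
  ht_adm K lam /\ forall mu : Meas R N, ht_adm K mu -> (mu K <= lam K)%E.

End defs.

(* Main.v *)
From HB Require Import structures.
Require Import Defs.
From mathcomp Require Import all_boot all_order all_algebra.
From mathcomp Require Import all_classical all_reals all_analysis.
From mathcomp Require Import ring lra.
From mathcomp Require Import measurable_realfun.
Import Order.TTheory GRing.Theory Num.Theory.
Import numFieldNormedType.Exports.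
Local Open Scope classical_set_scope.
Local Open Scope ring_scope.
Set Implicit Arguments. Unset Strict Implicit.

Section Key.
Variables (R : realType) (N : nat) (gamma : 'rV[R]_N).

Lemma dotpC (u v : 'rV[R]_N) : dotp u v = dotp v u.
Proof. by apply: eq_bigr => i _; rewrite mulrC. Qed.

Lemma sqn_dotp (u : 'rV[R]_N) : sqn u = dotp u u.
Proof. by apply: eq_bigr => i _; rewrite expr2. Qed.

Lemma dotp_lin (a b : R) (u v w : 'rV[R]_N) :
  dotp (a *: u + b *: v) w = a * dotp u w + b * dotp v w.
Proof.
rewrite /dotp !mulr_sumr -big_split /=; apply: eq_bigr => i _.
by rewrite !mxE; ring.
Qed.

Lemma sqn_lin (a b : R) (u v : 'rV[R]_N) :
  sqn (a *: u + b *: v) = a ^+ 2 * sqn u + 2 * a * b * dotp u v + b ^+ 2 * sqn v.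
Proof.
rewrite !sqn_dotp dotp_lin (dotpC u) (dotpC v) !dotp_lin (dotpC v u); ring.
Qed.


Lemma vec_form (a b : R) (u v : 'rV[R]_N) : a *: u - b *: v = a *: u + (- b) *: v.
Proof. by rewrite scaleNr. Qed.

Lemma dotpZ (c : R) (u w : 'rV[R]_N) : dotp (c *: u) w = c * dotp u w.
Proof.
rewrite /dotp mulr_sumr; apply: eq_bigr => i _; rewrite !mxE; ring.
Qed.

Lemma shape (P1 P2 P3 P4 e1 e2 e3 f1 f2 f3 : R) :
  0 < P1 -> 0 < P2 -> 0 < P3 -> 0 < P4 ->
  P2 * P4 = P3 * P1 ->
  e1 - e2 - e3 = f1 - f2 - f3 ->
  P1^-1 * expR e1 / (expR e2 * expR e3) =
  P2^-1 * expR f1 / (P3^-1 * expR f2 * (P4 * expR f3)).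
Proof.
move=> p1 p2 p3 p4 hP he.
have -> : e1 = f1 - f2 - f3 + e2 + e3 by rewrite -he; ring.
have -> : P1 = P2 * P4 / P3 by rewrite hP; field; rewrite gt_eqF.
rewrite !expRD !expRN.
have := expR_gt0 f1; have := expR_gt0 f2; have := expR_gt0 f3;
have := expR_gt0 e2; have := expR_gt0 e3.
move: (expR f1) (expR f2) (expR f3) (expR e2) (expR e3) => a b c d e *.
field; rewrite !gt_eqF //.
Qed.

Lemma sqnBZ (c : R) (u v : 'rV[R]_N) : sqn (u - c *: v) = sqn u - 2 * c * dotp u v + c ^+ 2 * sqn v.
Proof.
have -> : u - c *: v = 1 *: u + (- c) *: v by rewrite scale1r scaleNr.
rewrite sqn_lin; ring.
Qed.

Lemma sqnNZB (c : R) (u v : 'rV[R]_N) : sqn (- (c *: u) - v) = c ^+ 2 * sqn u + 2 * c * dotp u v + sqn v.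
Proof.
have -> : - (c *: u) - v = (- c) *: u + (-1) *: v by rewrite scaleN1r scaleNr.
rewrite sqn_lin; ring.
Qed.

Lemma sqnB (u v : 'rV[R]_N) : sqn (u - v) = sqn u - 2 * dotp u v + sqn v.
Proof.
have -> : u - v = 1 *: u + (-1) *: v by rewrite scaleN1r scale1r.
rewrite sqn_lin; ring.
Qed.

Lemma key (z w : Pt R N) : z.2 < 0 -> 0 < w.2 ->
  F (zsub z (A w)) / (ht gamma z * hts gamma (A w)) =
  F (zsub (Ainv z) w) / (h gamma (Ainv z) * hs gamma w).
Proof.
case: z => x t; case: w => y s /= t0 s0.
rewrite /h /hs /F /zsub /A /Ainv /ht /hts /=.
have T0 : 0 < - (4 * t)^-1.
  by rewrite oppr_gt0 invr_lt0 pmulr_rlt0.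
have t0' : t != 0 by rewrite lt_eqF.
have s0' : s != 0 by rewrite gt_eqF.
have -> : (0 < t - - (4 * s)^-1) = (0 < - (4 * t)^-1 - s).
  rewrite opprK.
  have -> : t + (4 * s)^-1 = (1 + 4 * t * s) / (4 * s) by field.
  have -> : - (4 * t)^-1 - s = (1 + 4 * t * s) / (- 4 * t) by field.
  have h1 : 0 < (4 * s)^-1 by rewrite invr_gt0; lra.
  have h2 : 0 < (- 4 * t)^-1 by rewrite invr_gt0; lra.
  by rewrite pmulr_lgt0 // [RHS]pmulr_lgt0.
case: ifP => pos; last by rewrite !mul0r.
rewrite T0.
set q := N%:R / 2.
set t1 := t - - (4 * s)^-1.
set t2 := - (4 * t)^-1 - s.
set T := - (4 * t)^-1.
have t1E : t1 = (1 + 4 * t * s) / (4 * s) by rewrite /t1; field.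
have t2E : t2 = (1 + 4 * t * s) / (- 4 * t) by rewrite /t2; field.
have c0 : 0 < 1 + 4 * t * s.
  have h2 : 0 < (- 4 * t)^-1 by rewrite invr_gt0; lra.
  have pos2 : 0 < t2 := pos. by move: pos2; rewrite t2E pmulr_lgt0.
have c0' : 1 + 4 * t * s != 0 by rewrite gt_eqF.
have t1p : 0 < t1 by rewrite t1E divr_gt0 // mulr_gt0.
have pi0 : 0 < pi :> R by exact: pi_gt0.
have pi0' : pi != 0 :> R by rewrite gt_eqF.
have Pid : (4 * pi * t2) `^ q * (pi / s) `^ q = (4 * pi * T) `^ q * (4 * pi * t1) `^ q.
  have t2p : 0 < t2 := pos.
  rewrite -!powRM; last 4 first.
  - by rewrite ltW // !mulr_gt0.
  - by rewrite ltW // !mulr_gt0.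
  - by rewrite ltW // !mulr_gt0.
  - by rewrite ltW // divr_gt0.
  congr (_ `^ _); rewrite t1E t2E /T; field.
  by rewrite s0' t0'.
rewrite !powRN; apply: shape; rewrite ?powR_gt0 ?mulr_gt0 ?divr_gt0 //.
  by rewrite invr_gt0.
rewrite !sqnBZ !sqnNZB !sqnB !dotpZ.
rewrite t1E t2E /T; field.
by rewrite s0' t0' c0'.
Qed.
End Key.

Section M1.
Variables (R : realType) (N : nat).

Lemma cont_meas (f : Pt R N -> R) : continuous f ->
  measurable_fun [set: BPt R N] (f : BPt R N -> R).
Proof.
move=> /continuousP cf; apply: (measurability _ (RGenOpens.measurableE R)).
move=> _ [_ [a [b ->] <-]]; rewrite setTI.
apply: sub_sigma_algebra; apply: cf; exact: interval_open.
Qed.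

Lemma cont_snd : continuous (fun w : Pt R N => w.2).
Proof. by move=> w; exact: cvg_snd. Qed.

Lemma cont_coord (i : 'I_N) : continuous (fun w : Pt R N => w.1 ord0 i).
Proof.
move=> w; apply: (@continuous_comp _ _ _ (fun w : Pt R N => w.1) (fun M : 'rV[R]_N => M ord0 i)).
  exact: cvg_fst.
exact: coord_continuous.
Qed.

Lemma meas_snd : measurable_fun [set: BPt R N] (fun w : BPt R N => w.2).
Proof. exact: (cont_meas cont_snd). Qed.

Lemma meas_coord i : measurable_fun [set: BPt R N] (fun w : BPt R N => w.1 ord0 i).
Proof. apply: cont_meas. exact: cont_coord. Qed.

End M1.

Lemma measurable_inv (R : realType) : measurable_fun [set: R] (@GRing.inv R).
Proof.
have -> : @GRing.inv R = fun x => if x != 0 then x^-1 else 0.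
  by apply/funext => x; case: eqP => // ->; rewrite invr0.
have mb : measurable_fun [set: R] (fun x : R => x != 0).
  apply: (measurable_fun_bool true).
  rewrite setTI; have -> : (fun x : R => x != 0) @^-1` [set true] = ~` [set 0].
    by apply/seteqP; split => x /=; case: eqP.
  exact/measurableC.
apply: measurable_fun_if => //.
- apply: open_continuous_measurable_fun.
    rewrite setTI; have -> : (fun x : R => x != 0) @^-1` [set true] = ~` [set 0].
      by apply/seteqP; split => x /=; case: eqP.
    by apply/closed_openC/accessible_closed_set1/hausdorff_accessible; exact: Rhausdorff.
  move=> x; rewrite inE /= => -[_ x0].
  exact: inv_continuous.
Qed.

Section M2.
Variables (R : realType) (N : nat) (gamma : 'rV[R]_N).
Local Notation P := (BPt R N).

Lemma meas_sqn (g : P -> 'rV[R]_N) : (forall i, measurable_fun setT (fun w => g w ord0 i)) ->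
  measurable_fun setT (fun w => sqn (g w)).
Proof.
move=> hg; rewrite /sqn; apply: measurable_sum => i.
exact: measurable_funX.
Qed.

Lemma meas_dotp (g : P -> 'rV[R]_N) (c : 'rV[R]_N) : (forall i, measurable_fun setT (fun w => g w ord0 i)) ->
  measurable_fun setT (fun w => dotp (g w) c).
Proof.
move=> hg; rewrite /dotp; apply: measurable_sum => i.
by apply: measurable_funM => //; exact: measurable_cst.
Qed.

Lemma meas_F_zsub (z : P) : measurable_fun setT (fun w : P => F (zsub z w)).
Proof.
rewrite /F /zsub /=.
have m2 : measurable_fun setT (fun w : P => z.2 - w.2).
  by apply: measurable_funB; [exact: measurable_cst | exact: meas_snd].
apply: measurable_fun_ifT.
- by apply: measurable_fun_ltr => //; exact: measurable_cst.
- apply: measurable_funM.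
    apply: (measurableT_comp (measurable_powR _)).
    by apply: measurable_funM => //; exact: measurable_cst.
  apply: (measurableT_comp (@measurable_expR R)).
  apply: measurable_funM.
    apply: measurable_funN; apply: meas_sqn => i.
    under eq_fun do rewrite !mxE.
    by apply: measurable_funB; [exact: measurable_cst | exact: meas_coord].
  apply: (measurableT_comp (@measurable_inv R)).
  by apply: measurable_funM => //; exact: measurable_cst.
- exact: measurable_cst.
Qed.

Lemma meas_hts : measurable_fun setT (hts gamma : P -> R).
Proof.
rewrite /hts; apply: (measurableT_comp (@measurable_expR R)).
apply: measurable_funB.
  by apply: measurable_funN; apply: meas_dotp => i; exact: meas_coord.
by apply: measurable_funM; [exact: measurable_cst | exact: meas_snd].
Qed.

Lemma meas_hs : measurable_fun setT (hs gamma : P -> R).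
Proof.
rewrite /hs; apply: measurable_funM.
  apply: (measurableT_comp (measurable_powR _)).
  apply: measurable_funM; first exact: measurable_cst.
  by apply: (measurableT_comp (@measurable_inv R)); exact: meas_snd.
apply: (measurableT_comp (@measurable_expR R)).
apply: measurable_funM.
  apply: meas_sqn => i; under eq_fun do rewrite !mxE.
  by apply: measurable_funB; [exact: meas_coord | exact: measurable_cst].
apply: (measurableT_comp (@measurable_inv R)).
by apply: measurable_funM; [exact: measurable_cst | exact: meas_snd].
Qed.

Definition Gint (z w : P) : R := F (zsub z w) / (ht gamma z * hts gamma w).
Definition Hint (z w : P) : R := F (zsub z w) / (h gamma z * hs gamma w).

Lemma meas_Gint z : measurable_fun setT (fun w => (Gint z w)%:E).
Proof.
apply/measurable_EFinP; apply: measurable_funM; first exact: meas_F_zsub.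
apply: (measurableT_comp (@measurable_inv R)).
by apply: measurable_funM; [exact: measurable_cst | exact: meas_hts].
Qed.

Lemma meas_Hint z : measurable_fun setT (fun w => (Hint z w)%:E).
Proof.
apply/measurable_EFinP; apply: measurable_funM; first exact: meas_F_zsub.
apply: (measurableT_comp (@measurable_inv R)).
by apply: measurable_funM; [exact: measurable_cst | exact: meas_hs].
Qed.

End M2.

Lemma cont_snd' (R : realType) (N : nat) : continuous (fun w : Pt R N => w.2).
Proof. by move=> w; exact: cvg_snd. Qed.

Section M3.
Variables (R : realType) (N : nat).
Local Notation P := (BPt R N).

Lemma aux1 (t : R) : t != 0 -> - (2 * - (4 * t)^-1)^-1 / (2 * t) = 1.
Proof. by move=> t0; field. Qed.
Lemma aux2 (t : R) : t != 0 -> - (4 * - (4 * t)^-1)^-1 = t.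
Proof. by move=> t0; field. Qed.
Lemma aux3 (t : R) : t != 0 -> - (2 * - (4 * t)^-1)^-1 * (2 * t)^-1 = 1.
Proof. by move=> t0; field. Qed.

Lemma A_Ainv (z : P) : z.2 != 0 -> A (Ainv z) = z.
Proof.
case: z => x t /= t0; rewrite /A /Ainv /=; congr (_, _).
  rewrite scalerN -scaleNr scalerA -[RHS]scale1r; congr (_ *: _); exact: aux1.
exact: aux2.
Qed.

Lemma Ainv_A (z : P) : z.2 != 0 -> Ainv (A z) = z.
Proof.
case: z => x t /= t0; rewrite /A /Ainv /=; congr (_, _).
  rewrite -scaleNr scalerA -[RHS]scale1r; congr (_ *: _); exact: aux3.
exact: aux2.
Qed.

Lemma A_lower (z : P) : upper z -> lower (A z).
Proof. by rewrite /upper /lower /A /= => t0; rewrite oppr_lt0 invr_gt0 mulr_gt0. Qed.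

Lemma A_upper (z : P) : lower z -> upper (A z).
Proof. by rewrite /upper /lower /A /= => t0; rewrite oppr_gt0 invr_lt0 pmulr_rlt0. Qed.

Lemma Ainv_upper (z : P) : lower z -> upper (Ainv z).
Proof. by rewrite /upper /lower /Ainv /= => t0; rewrite oppr_gt0 invr_lt0 pmulr_rlt0. Qed.

Lemma Ainv_lower (z : P) : upper z -> lower (Ainv z).
Proof. by rewrite /upper /lower /Ainv /= => t0; rewrite oppr_lt0 invr_gt0 mulr_gt0. Qed.

Lemma A0 (z : P) : z.2 = 0 -> A z = (0, 0).
Proof. by case: z => x t /= ->; rewrite /A /= !mulr0 !invr0 scale0r ?oppr0. Qed.

Lemma Ainv0 (z : P) : z.2 = 0 -> Ainv z = (0, 0).
Proof. by case: z => x t /= ->; rewrite /Ainv /= !mulr0 !invr0 scale0r ?oppr0. Qed.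

Lemma A_cont (z : Pt R N) : z.2 != 0 -> {for z, continuous (@A R N)}.
Proof.
move=> z0.
have c2 : {for z, continuous (fun w : Pt R N => 2 * w.2)}.
  by apply: continuousM; [exact: cst_continuous | exact: cvg_snd].
have c4 : {for z, continuous (fun w : Pt R N => 4 * w.2)}.
  by apply: continuousM; [exact: cst_continuous | exact: cvg_snd].
have h1 : (fun w : Pt R N => (2 * w.2)^-1 *: w.1) @ nbhs z --> ((2 * z.2)^-1 *: z.1).
  apply: cvgZ; last exact: cvg_fst.
  by apply: cvgV => //; rewrite mulf_neq0.
have h2 : (fun w : Pt R N => - (4 * w.2)^-1) @ nbhs z --> (- (4 * z.2)^-1).
  by apply: cvgN; apply: cvgV => //; rewrite mulf_neq0.
exact: (cvg_pair h1 h2).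
Qed.

Lemma Ainv_cont (z : Pt R N) : z.2 != 0 -> {for z, continuous (@Ainv R N)}.
Proof.
move=> z0.
have c2 : {for z, continuous (fun w : Pt R N => 2 * w.2)}.
  by apply: continuousM; [exact: cst_continuous | exact: cvg_snd].
have c4 : {for z, continuous (fun w : Pt R N => 4 * w.2)}.
  by apply: continuousM; [exact: cst_continuous | exact: cvg_snd].
have h1 : (fun w : Pt R N => - ((2 * w.2)^-1 *: w.1)) @ nbhs z --> (- ((2 * z.2)^-1 *: z.1)).
  apply: cvgN; apply: cvgZ; last exact: cvg_fst.
  by apply: cvgV => //; rewrite mulf_neq0.
have h2 : (fun w : Pt R N => - (4 * w.2)^-1) @ nbhs z --> (- (4 * z.2)^-1).
  by apply: cvgN; apply: cvgV => //; rewrite mulf_neq0.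
exact: (cvg_pair h1 h2).
Qed.

Lemma openNZ : open [set z : Pt R N | z.2 != 0].
Proof.
have -> : [set z : Pt R N | z.2 != 0] = (fun z : Pt R N => z.2) @^-1` (~` [set 0]).
  by apply/seteqP; split => z /=; case: eqP.
apply: (proj1 (continuousP _) (@cont_snd' R N)).
by apply/closed_openC/accessible_closed_set1/hausdorff_accessible; exact: Rhausdorff.
Qed.

Lemma meas_piece (f : Pt R N -> Pt R N) (c : Pt R N) :
  (forall z : Pt R N, z.2 != 0 -> {for z, continuous f}) ->
  (forall z : Pt R N, z.2 = 0 -> f z = c) ->
  measurable_fun [set: BPt R N] (f : BPt R N -> BPt R N).
Proof.
move=> fc f0.
apply: (@measurability _ _ (BPt R N) (BPt R N) setT f open) => //.
move=> _ [U oU <-].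
have -> : [set: BPt R N] `&` f @^-1` U =
   ([set z : Pt R N | z.2 != 0] `&` f @^-1` U) `|`
   ([set z : Pt R N | z.2 = 0] `&` f @^-1` U).
  apply/seteqP; split => [z [_ Uz]|z [[_ Uz]|[_ Uz]]] //.
  by case: (eqVneq z.2 0) => h; [right|left].
apply: measurableU.
  apply: sub_sigma_algebra; rewrite openE => z [z0 Uz].
  rewrite /interior; apply: filterI.
    by apply: open_nbhs_nbhs; split => //; exact: openNZ.
  apply: (fc z z0); apply: open_nbhs_nbhs; split => //.
have mZ : measurable ([set z : Pt R N | z.2 = 0] : set (BPt R N)).
  have -> : [set z : Pt R N | z.2 = 0] = ~` [set z : Pt R N | z.2 != 0].
    by apply/seteqP; split => z /=; case: eqP.
  by apply: measurableC; apply: sub_sigma_algebra; exact: openNZ.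
case: (pselect (U c)) => Uc.
  have -> : [set z : Pt R N | z.2 = 0] `&` f @^-1` U = [set z : Pt R N | z.2 = 0].
    by apply/seteqP; split => [z [] //|z /= z0]; split => //; rewrite /preimage /= f0.
  exact: mZ.
have -> : [set z : Pt R N | z.2 = 0] `&` f @^-1` U = set0.
  by apply/seteqP; split => [z [/= z0]|//]; rewrite /preimage /= f0.
exact: measurable0.
Qed.

Lemma meas_A : measurable_fun [set: BPt R N] (@A R N).
Proof. by apply: (@meas_piece _ (0, 0)); [exact: A_cont | exact: A0]. Qed.

Lemma meas_Ainv : measurable_fun [set: BPt R N] (@Ainv R N).
Proof. by apply: (@meas_piece _ (0, 0)); [exact: Ainv_cont | exact: Ainv0]. Qed.

End M3.

Section PF.
Context (R : realType) (N : nat) (mu : Meas R N) (f : BPt R N -> BPt R N).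
Definition pf (mf : measurable_fun [set: BPt R N] f) (A : set (BPt R N)) : \bar R :=
  mu (f @^-1` A).
Variable mf : measurable_fun [set: BPt R N] f.
Local Open Scope ereal_scope.
Let pf0 : pf mf set0 = 0.
Proof. by rewrite /pf preimage_set0 measure0. Qed.
Let pf_ge0 A : 0 <= pf mf A.
Proof. by apply: measure_ge0; rewrite -[X in measurable X]setIT; apply: mf. Qed.
Let pf_sa : semi_sigma_additive (pf mf).
Proof.
move=> F mF tF mUF; rewrite /pf preimage_bigcup.
apply: measure_semi_sigma_additive.
- by move=> n; rewrite -[X in measurable X]setTI; exact: mf.
- apply/trivIsetP => /= i j _ _ ij; rewrite -preimage_setI.
  by move/trivIsetP : tF => /(_ _ _ _ _ ij) ->//; rewrite preimage_set0.
- by rewrite -preimage_bigcup -[X in measurable X]setTI; exact: mf.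
Qed.
HB.instance Definition _ := isMeasure.Build _ _ _ (pf mf) pf0 pf_ge0 pf_sa.
End PF.

Section M4.
Variables (R : realType) (N : nat).
Local Notation P := (BPt R N).
Local Open Scope ereal_scope.

Lemma pfE (mu : Meas R N) f (mf : measurable_fun setT f) (E : set P) :
  (pf mu mf : Meas R N) E = mu (f @^-1` E).
Proof. by []. Qed.

Lemma msupport (mu : Meas R N) (K S : set P) : measurable K -> measurable S ->
  mu (~` K) = 0 -> mu S = mu (S `&` K).
Proof.
move=> mK mS mK0.
rewrite -{1}(setUIDK S K) measureU //.
- have : mu (S `\` K) <= mu (~` K).
    by apply: le_measure; rewrite ?inE; [exact: measurableD|exact: measurableC|move=> x []].
  move=> h; have h0 : mu (S `\` K) = 0%E by apply/eqP; rewrite eq_le measure_ge0 andbT -mK0.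
  rewrite -[in RHS](adde0 (mu (S `&` K))); congr (_ + _); exact: h0.
- exact: measurableI.
- exact: measurableD.
- by rewrite setDE setIA [X in X `&` _]setIC -!setIA setICr !setI0.
Qed.

Lemma compact_meas (K : set P) : compact (K : set (Pt R N)) -> measurable K.
Proof.
move=> /compact_closed cK.
have : closed (K : set (Pt R N)) by apply: cK; exact: norm_hausdorff.
move=> /closed_openC oK.
rewrite -(setCK K); apply: measurableC; exact: sub_sigma_algebra.
Qed.

Lemma transfer (f : P -> P) (mf : measurable_fun setT f) (K : set P) (mK : measurable K)
  (mu nu : Meas R N) (muK : mu (~` K) = 0)
  (hnu : forall E, measurable E -> nu E = mu (f @^-1` E))
  (g1 g2 : P -> R)
  (mg1 : measurable_fun setT (fun w => (g1 w)%:E))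
  (mg2 : measurable_fun setT (fun w => (g2 w)%:E))
  (g10 : forall w, (0 <= g1 w)%R)
  (heq : forall w, K w -> g1 (f w) = g2 w) :
  \int[nu]_(w in [set: P]) (g1 w)%:E = \int[mu]_(w in [set: P]) (g2 w)%:E.
Proof.
have := @ge0_integral_pushforward _ _ _ _ _ f mf mu setT (fun w => (g1 w)%:E) measurableT mg1.
move=> /(_ (fun w _ => g10 w)) H.
transitivity (\int[mu]_(x in f @^-1` setT) ((fun w => (g1 w)%:E) \o f) x).
  rewrite -H; apply: eq_measure_integral => E mE _; exact: hnu.
rewrite preimage_setT; apply: ae_eq_integral => //.
- exact: measurableT_comp.
- exists (~` K); split => //; first exact: measurableC.
  move=> w /= hw Kw; apply: hw => _; by rewrite heq.
Qed.

Lemma MK_push (f : P -> P) (mf : measurable_fun setT f) (K : set P)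
  (cK : compact (K : set (Pt R N)))
  (fc : forall z, K z -> {for z, continuous (f : Pt R N -> Pt R N)})
  (mu nu : Meas R N) (muK : MK K mu)
  (hnu : forall E, measurable E -> nu E = mu (f @^-1` E)) :
  MK (f @` K) nu.
Proof.
case: muK => mu0 muf.
have mK := compact_meas cK.
have cfK : compact ((f @` K) : set (Pt R N)).
  apply: continuous_compact => //; apply: continuous_in_subspaceT => z.
  by rewrite inE => /fc.
have mfK := compact_meas cfK.
have mpre : forall E, measurable E -> measurable (f @^-1` E).
  by move=> E mE; rewrite -[X in measurable X]setTI; exact: mf.
split.
  rewrite hnu; last exact: measurableC.
  apply/eqP; rewrite eq_le measure_ge0 andbT -mu0.
  apply: le_measure; rewrite ?inE; [apply: mpre; exact: measurableC | exact: measurableC |].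
  by move=> w /= nfK Kw; apply: nfK; exists w.
rewrite hnu // (msupport _ _ mu0) //; last exact: mpre.
apply: le_lt_trans muf; apply: le_measure; rewrite ?inE; [|exact: mK|by move=> w []].
by apply: measurableI => //; exact: mpre.
Qed.

End M4.

Section M5.
Variables (R : realType) (N : nat) (gamma : 'rV[R]_N).
Local Notation P := (BPt R N).

Lemma upper_neq0 (z : P) : upper z -> z.2 != 0.
Proof. by rewrite /upper => h; rewrite gt_eqF. Qed.
Lemma lower_neq0 (z : P) : lower z -> z.2 != 0.
Proof. by rewrite /lower => h; rewrite lt_eqF. Qed.

Lemma F_ge0 (z : P) : 0 <= F z.
Proof. rewrite /F; case: ifP => // _; exact: mulr_ge0 (powR_ge0 _ _) (expR_ge0 _). Qed.

Lemma Gint_ge0 z w : 0 <= Gint gamma z w.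
Proof. by rewrite /Gint divr_ge0 ?F_ge0 // mulr_ge0 // expR_ge0. Qed.

Lemma Hint_ge0 z w : 0 <= Hint gamma z w.
Proof.
rewrite /Hint divr_ge0 ?F_ge0 // mulr_ge0 //; first exact: F_ge0.
by rewrite /hs mulr_ge0 ?powR_ge0 ?expR_ge0.
Qed.

Lemma cpt_img (f : Pt R N -> Pt R N) (K : set P) :
  (forall z, K z -> {for z, continuous f}) -> compact (K : set (Pt R N)) ->
  compact ((f @` K) : set (Pt R N)).
Proof.
move=> fc cK; apply: continuous_compact => //; apply: continuous_in_subspaceT => z.
by rewrite inE => /fc.
Qed.

Lemma lemI (K : set P) (mu : Meas R N) :
  compact (K : set (Pt R N)) -> K `<=` @upper R N -> MK K mu ->
  forall nu : Meas R N,
    (forall E, measurable E -> nu E = mu ((@A R N) @^-1` E)) ->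
    MK ((@A R N) @` K) nu /\
    forall z, @lower R N z -> Ph gamma mu (Ainv z) = Pht gamma nu z.
Proof.
move=> cK Kup muK nu hnu; split.
  apply: (MK_push (@meas_A R N) cK _ muK hnu) => z Kz.
  by apply: A_cont; apply: upper_neq0; exact: Kup.
move=> z lz; symmetry.
rewrite /Pht /Ph.
apply: (transfer (@meas_A R N) (compact_meas cK) muK.1 hnu (g1 := Gint gamma z) (g2 := Hint gamma (Ainv z))).
- exact: meas_Gint.
- exact: meas_Hint.
- exact: Gint_ge0.
- by move=> w Kw; rewrite /Gint /Hint key //; exact: Kup.
Qed.

Lemma lemII (K : set P) (mu : Meas R N) :
  compact (K : set (Pt R N)) -> K `<=` @lower R N -> MK K mu ->
  forall nu : Meas R N,
    (forall E, measurable E -> nu E = mu ((@Ainv R N) @^-1` E)) ->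
    MK ((@Ainv R N) @` K) nu /\
    forall z, @upper R N z -> Pht gamma mu (A z) = Ph gamma nu z.
Proof.
move=> cK Klo muK nu hnu; split.
  apply: (MK_push (@meas_Ainv R N) cK _ muK hnu) => z Kz.
  by apply: Ainv_cont; apply: lower_neq0; exact: Klo.
move=> z uz; symmetry.
rewrite /Pht /Ph.
apply: (transfer (@meas_Ainv R N) (compact_meas cK) muK.1 hnu (g1 := Hint gamma z) (g2 := Gint gamma (A z))).
- exact: meas_Hint.
- exact: meas_Gint.
- exact: Hint_ge0.
- move=> w Kw; have lw := Klo _ Kw.
  have := @key R N gamma (A z) (Ainv w) (A_lower uz) (Ainv_upper lw).
  rewrite A_Ainv ?lower_neq0 // Ainv_A ?upper_neq0 //.
Qed.

End M5.

Section M6.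
Variables (R : realType) (N : nat).
Local Notation P := (BPt R N).

Lemma sup_attained (S : set (\bar R)) x : S x -> (forall y, S y -> (y <= x)%E) ->
  ereal_sup S = x.
Proof.
move=> Sx ub; apply/eqP; rewrite eq_le; apply/andP; split.
  by apply: ub_ereal_sup => y /ub.
exact: ereal_sup_ubound.
Qed.

Lemma mpre (f : P -> P) (mf : measurable_fun setT f) (S : set P) :
  measurable S -> measurable (f @^-1` S).
Proof. by move=> mS; rewrite -[X in measurable X]setTI; exact: mf. Qed.

Lemma mass_pre (lam : Meas R N) (K S : set P) : measurable K -> measurable S ->
  K `<=` S -> lam (~` K) = 0%E -> lam S = lam K.
Proof.
move=> mK mS KS l0; rewrite (msupport mK mS l0).
by congr (lam _); apply/seteqP; split => [z []//|z Kz]; split => //; exact: KS.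
Qed.

Lemma AinvA_img (K : set P) : K `<=` @upper R N -> (@Ainv R N) @` ((@A R N) @` K) = K.
Proof.
move=> Kup; apply/seteqP; split => [_ [_ [w Kw <-] <-]|z Kz].
  by rewrite Ainv_A // upper_neq0 //; exact: Kup.
by exists (A z); [exists z | rewrite Ainv_A // upper_neq0 //; exact: Kup].
Qed.

Lemma AAinv_img (K : set P) : K `<=` @lower R N -> (@A R N) @` ((@Ainv R N) @` K) = K.
Proof.
move=> Klo; apply/seteqP; split => [_ [_ [w Kw <-] <-]|z Kz].
  by rewrite A_Ainv // lower_neq0 //; exact: Klo.
by exists (Ainv z); [exists z | rewrite A_Ainv // lower_neq0 //; exact: Klo].
Qed.

Lemma A2_eq0 (w : P) : (A w).2 = 0 -> w.2 = 0.
Proof.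
rewrite /A /= => /eqP; rewrite oppr_eq0 invr_eq0 mulf_eq0 => /orP [|/eqP //].
by rewrite pnatr_eq0.
Qed.

Lemma imgA_iff (E : set P) (z : P) : z.2 != 0 -> ((@A R N) @` E) z <-> E (Ainv z).
Proof.
move=> z0; split => [[w Ew wz]|Ez].
  have w0 : w.2 != 0 by apply/eqP => w0; move: z0; rewrite -wz (A0 w0) eqxx.
  by rewrite -wz Ainv_A.
by exists (Ainv z) => //; rewrite A_Ainv.
Qed.

Lemma meas_set1 (x : P) : measurable [set x].
Proof.
rewrite -(setCK [set x]); apply: measurableC; apply: sub_sigma_algebra.
apply: closed_openC; apply: accessible_closed_set1; apply: hausdorff_accessible.
exact: norm_hausdorff.
Qed.

Lemma meas_imgA (E : set P) : measurable E -> measurable ((@A R N) @` E).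
Proof.
move=> mE.
have mNZ : measurable ([set z : Pt R N | z.2 != 0] : set P).
  by apply: sub_sigma_algebra; exact: openNZ.
have mAi : measurable ((@Ainv R N) @^-1` E) by exact: (mpre (@meas_Ainv R N)).
case: (pselect (exists w : P, E w /\ w.2 = 0)) => [[w0 [Ew0 w00]]|nex].
  have -> : (@A R N) @` E = ((@Ainv R N) @^-1` E `&` [set z : Pt R N | z.2 != 0]) `|` [set ((0, 0) : P)].
    apply/seteqP; split => [z [w Ew wz]|z [[Ez z0]|/= ->]].
    - case: (eqVneq z.2 0) => z0.
        right; rewrite /= -wz A0 //; apply: A2_eq0; by rewrite wz.
      by left; split => //; apply/imgA_iff => //; exists w.
    - by apply/imgA_iff.
    - by exists w0 => //; rewrite A0.
  by apply: measurableU => //; [exact: measurableI | exact: meas_set1].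
have -> : (@A R N) @` E = ((@Ainv R N) @^-1` E `&` [set z : Pt R N | z.2 != 0]).
  apply/seteqP; split => [z [w Ew wz]|z [Ez z0]].
  - case: (eqVneq z.2 0) => z0.
      exfalso; apply: nex; exists w; split => //; apply: A2_eq0; by rewrite wz.
    by split => //; apply/imgA_iff => //; exists w.
  - by apply/imgA_iff.
exact: measurableI.
Qed.

Lemma conv_nu (K : set P) (mu : Meas R N) : measurable K -> K `<=` @lower R N ->
  mu (~` K) = 0%E -> forall E, measurable E ->
  mu ((@A R N) @` E) = mu ((@Ainv R N) @^-1` E).
Proof.
move=> mK Klo mu0 E mE.
rewrite (msupport mK (meas_imgA mE) mu0) (msupport mK (mpre (@meas_Ainv R N) mE) mu0).
congr (mu _); apply/seteqP; split => z [h Kz]; split => //.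
  by apply/imgA_iff => //; apply: lower_neq0; exact: Klo.
by apply/imgA_iff => //; apply: lower_neq0; exact: Klo.
Qed.

End M6.

Section M7.
Variables (R : realType) (N : nat) (gamma : 'rV[R]_N).
Local Notation P := (BPt R N).
Local Open Scope ereal_scope.

Lemma cAK (K : set P) : compact (K : set (Pt R N)) -> K `<=` @upper R N ->
  compact (((@A R N) @` K) : set (Pt R N)).
Proof.
move=> cK Kup; apply: cpt_img cK => z Kz; apply: A_cont; apply: upper_neq0; exact: Kup.
Qed.

Lemma cAiK (K : set P) : compact (K : set (Pt R N)) -> K `<=` @lower R N ->
  compact (((@Ainv R N) @` K) : set (Pt R N)).
Proof.
move=> cK Klo; apply: cpt_img cK => z Kz; apply: Ainv_cont; apply: lower_neq0; exact: Klo.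
Qed.

Lemma AK_lower (K : set P) : K `<=` @upper R N -> (@A R N) @` K `<=` @lower R N.
Proof. by move=> Kup _ [w Kw <-]; apply: A_lower; exact: Kup. Qed.

Lemma AiK_upper (K : set P) : K `<=` @lower R N -> (@Ainv R N) @` K `<=` @upper R N.
Proof. by move=> Klo _ [w Kw <-]; apply: Ainv_upper; exact: Klo. Qed.

Lemma ii_fwd (K : set P) (lam : Meas R N) :
  compact (K : set (Pt R N)) -> K `<=` @upper R N -> MK K lam ->
  forall nu : Meas R N,
    (forall E, measurable E -> nu E = lam ((@A R N) @^-1` E)) ->
    h_capacitary gamma K lam -> ht_capacitary gamma ((@A R N) @` K) nu.
Proof.
move=> cK Kup lamK nu hnu [[_ lamb] lammax].
have [MKnu Ieq] := lemI gamma cK Kup lamK hnu.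
split; first by split => // z lz; rewrite -Ieq //; apply: lamb; exact: Ainv_upper.
move=> mu [muK mub].
have [MK' Ieq'] := lemII gamma (cAK cK Kup) (AK_lower Kup) muK
   (nu := pf mu (@meas_Ainv R N)) (fun E _ => erefl).
rewrite AinvA_img // in MK'.
have adm : h_adm gamma K (pf mu (@meas_Ainv R N)).
  by split => // z uz; rewrite -Ieq' //; apply: mub; exact: A_lower.
have le1 := lammax _ adm.
have mK := compact_meas cK.
have mAK := compact_meas (cAK cK Kup).
apply: (@le_trans _ _ (pf mu (@meas_Ainv R N) K)).
  apply: le_measure; rewrite ?inE //; first exact: (mpre (@meas_Ainv R N)).
  by move=> _ [w Kw <-]; rewrite /preimage /= Ainv_A // upper_neq0 //; exact: Kup.
apply: (le_trans le1); rewrite hnu //.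
apply: le_measure; rewrite ?inE //; first exact: (mpre (@meas_A R N)).
by move=> w Kw; exists w.
Qed.

Lemma ii_bwd (K : set P) (lam : Meas R N) :
  compact (K : set (Pt R N)) -> K `<=` @upper R N -> MK K lam ->
  forall nu : Meas R N,
    (forall E, measurable E -> nu E = lam ((@A R N) @^-1` E)) ->
    ht_capacitary gamma ((@A R N) @` K) nu -> h_capacitary gamma K lam.
Proof.
move=> cK Kup lamK nu hnu [[MKnu nub] numax].
have [_ Ieq] := lemI gamma cK Kup lamK hnu.
have mK := compact_meas cK.
have mAK := compact_meas (cAK cK Kup).
split.
  split => // z uz.
  rewrite (_ : z = Ainv (A z)); last by rewrite Ainv_A // upper_neq0.
  rewrite Ieq; last exact: A_lower.
  by apply: nub; exact: A_lower.
move=> mu [muK mub].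
have [MK' Ieq'] := lemI gamma cK Kup muK (nu := pf mu (@meas_A R N)) (fun E _ => erefl).
have adm : ht_adm gamma ((@A R N) @` K) (pf mu (@meas_A R N)).
  by split => // z lz; rewrite -Ieq' //; apply: mub; exact: Ainv_upper.
have le1 := numax _ adm.
apply: (@le_trans _ _ (pf mu (@meas_A R N) ((@A R N) @` K))).
  apply: le_measure; rewrite ?inE //; first exact: (mpre (@meas_A R N)).
  by move=> w Kw; exists w.
apply: (le_trans le1); rewrite hnu //.
rewrite (mass_pre mK (mpre (@meas_A R N) mAK)) //; first by move=> w Kw; exists w.
exact: lamK.1.
Qed.

End M7.
Unset Implicit Arguments. Set Strict Implicit.
Theorem lemma4p2 (R : realType) (N : nat) (hN : (0 < N)%N) (gamma : 'rV[R]_N) :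
  (* (i), first half *)
  (forall (K : set (BPt R N)) (mu : Meas R N),
      compact (K : set (Pt R N)) -> K `<=` @upper R N -> MK K mu ->
      forall nu : Meas R N,
        (forall E, measurable E -> nu E = mu ((@A R N) @^-1` E)) ->
        MK ((@A R N) @` K) nu /\
        forall z, @lower R N z -> Ph gamma mu (Ainv z) = Pht gamma nu z) /\
  (* (i), second half *)
  (forall (K : set (BPt R N)) (mu : Meas R N),
      compact (K : set (Pt R N)) -> K `<=` @lower R N -> MK K mu ->
      forall nu : Meas R N,
        (forall E, measurable E -> nu E = mu ((@A R N) @` E)) ->
        MK ((@Ainv R N) @` K) nu /\
        forall z, @upper R N z -> Pht gamma mu (A z) = Ph gamma nu z) /\
  (* (ii) *)
  (forall (K : set (BPt R N)) (lam : Meas R N),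
      compact (K : set (Pt R N)) -> K `<=` @upper R N -> MK K lam ->
      forall nu : Meas R N,
        (forall E, measurable E -> nu E = lam ((@A R N) @^-1` E)) ->
        (h_capacitary gamma K lam <-> ht_capacitary gamma ((@A R N) @` K) nu)) /\
  (* (iii) *)
  (forall (K : set (BPt R N)) (lam : Meas R N),
      compact (K : set (Pt R N)) -> K `<=` @upper R N ->
      h_capacitary gamma K lam ->
      Cht gamma ((@A R N) @` K) = lam K /\ lam K = Ch gamma K) /\
  (forall (K : set (BPt R N)) (lam : Meas R N),
      compact (K : set (Pt R N)) -> K `<=` @lower R N ->
      ht_capacitary gamma K lam ->
      Ch gamma ((@Ainv R N) @` K) = lam K /\ lam K = Cht gamma K).
Proof.
split; [|split; [|split; [|split]]].
- by move=> K mu cK Kup muK nu hnu; exact: lemI.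
- move=> K mu cK Klo muK nu hnu; apply: lemII => // E mE.
  by rewrite hnu // (conv_nu (compact_meas cK) Klo muK.1).
- by move=> K lam cK Kup lamK nu hnu; split; [exact: ii_fwd | exact: ii_bwd].
- move=> K lam cK Kup hcap.
  have lamK := hcap.1.1.
  have ncap := ii_fwd (gamma := gamma) cK Kup lamK (nu := pf lam (@meas_A R N)) (fun E _ => erefl) hcap.
  have mK := compact_meas cK.
  have mAK := compact_meas (cAK cK Kup).
  have mass : pf lam (@meas_A R N) ((@A R N) @` K) = lam K.
    rewrite pfE (mass_pre mK (mpre (@meas_A R N) mAK)) //; first by move=> w Kw; exists w.
    exact: lamK.1.
  split.
    apply: sup_attained; first by exists (pf lam (@meas_A R N)); split => //; exact: ncap.1.
    by move=> y [mu [adm ->]]; rewrite -mass; exact: ncap.2.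
  apply/esym/sup_attained; first by exists lam; split => //; exact: hcap.1.
  by move=> y [mu [adm ->]]; exact: hcap.2.
- move=> K lam cK Klo hcap.
  have [[lamK lamb] lammax] := hcap.
  have [MKn In] := lemII gamma cK Klo lamK (nu := pf lam (@meas_Ainv R N)) (fun E _ => erefl).
  have mK := compact_meas cK.
  have mAiK := compact_meas (cAiK cK Klo).
  have nadm : h_adm gamma ((@Ainv R N) @` K) (pf lam (@meas_Ainv R N)).
    by split => // z uz; rewrite -In //; apply: lamb; exact: A_lower.
  have mass : pf lam (@meas_Ainv R N) ((@Ainv R N) @` K) = lam K.
    rewrite pfE (mass_pre mK (mpre (@meas_Ainv R N) mAiK)) //; first by move=> w Kw; exists w.
    exact: lamK.1.
  split.
    apply: sup_attained; first by exists (pf lam (@meas_Ainv R N)); split => //.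
    move=> y [mu [[muK mub] ->]].
    have [MK' I'] := lemI gamma (cAiK cK Klo) (AiK_upper Klo) muK
       (nu := pf mu (@meas_A R N)) (fun E _ => erefl).
    rewrite AAinv_img // in MK'.
    have adm' : ht_adm gamma K (pf mu (@meas_A R N)).
      by split => // z lz; rewrite -I' //; apply: mub; exact: Ainv_upper.
    apply: (le_trans _ (lammax _ adm')).
    apply: le_measure; rewrite ?inE //; first exact: (mpre (@meas_A R N)).
    by move=> _ [w Kw <-]; rewrite /preimage /= A_Ainv // lower_neq0 //; exact: Klo.
  apply/esym/sup_attained; first by exists lam; split.
  by move=> y [mu [adm ->]]; exact: lammax.
Qed.
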